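(* If $K\subseteq\beta\mathbb{T}$ is a nonempty compact set closed under $\hat{}$ which is minimal among nonempty compact subsets of $\beta\mathbb{T}$ closed under $\hat{}$, then $K$ is not separable.
   Context: For $a,b\subseteq(0,1]$ put $a\,\hat{}\,b=\tfrac12 a\cup\tfrac12(b+1)$; $\mathbb{T}$ is the set generated from $\mathbf{1}=\{1\}$ by $\hat{}$ (the free binary system on one generator). $\beta\mathbb{T}$ is the Čech–Stone compactification of the discrete set $\mathbb{T}$ (the space of ultrafilters on $\mathbb{T}$ with its usual compact topology), and $\hat{}$ is extended to $\beta\mathbb{T}$ by: $W\in\mathcal{U}\,\hat{}\,\mathcal{V}$ iff $\{u\in\mathbb{T}:\{v\in\mathbb{T}:u\,\hat{}\,v\in W\}\in\mathcal{V}\}\in\mathcal{U}$. A subset $K$ is closed under $\hat{}$ if $\xi\,\hat{}\,\eta\in K$ whenever $\xi,\eta\in K$. *)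

(* Defs.v *)
From HB Require Import structures.
From mathcomp Require Import all_boot all_order.
From mathcomp Require Import boolp classical_sets cardinality filter topology.
Set Implicit Arguments. Unset Strict Implicit. Unset Printing Implicit Defensive.
Local Open Scope classical_set_scope.

(* The free binary system on one generator 1: formal terms built from [one]
   by the binary operation [hat]. *)
Inductive tree : Type := one : tree | hat : tree -> tree -> tree.

Definition betaT : Type := {F : set_system tree | UltraFilter F}.

HB.instance Definition _ := gen_eqMixin betaT.
HB.instance Definition _ := gen_choiceMixin betaT.

Definition basic_open (A : set tree) : set betaT := [set U | proj1_sig U A].
HB.instance Definition _ := isSubBaseTopological.Build betaT
  (@setT (set tree)) basic_open.

Definition hat_ext (U V : set_system tree) : set_system tree :=
  [set W | U [set u | V [set v | W (hat u v)]]].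

Definition hat_closed (K : set betaT) : Prop :=
  forall x y : betaT, K x -> K y ->
    exists2 z : betaT, K z & proj1_sig z = hat_ext (proj1_sig x) (proj1_sig y).

Definition separable {X : topologicalType} (S : set X) : Prop :=
  exists D : set X, [/\ D `<=` S, countable D & S `<=` closure D].

(* Main.v *)
Require Import Defs.
From HB Require Import structures.
From mathcomp Require Import all_boot all_order.
From mathcomp Require Import boolp classical_sets cardinality filter topology.
Local Open Scope classical_set_scope.
Set Implicit Arguments. Unset Strict Implicit.

Fixpoint ell (t : tree) : nat := match t with Defs.one => 0 | Defs.hat u _ => (ell u).+1 end.
Definition Rt (t : tree) : tree := match t with Defs.one => Defs.one | Defs.hat _ v => v end.

Lemma bo_open (A : set tree) : open (basic_open A).
Proof.
exists [set basic_open A]; first by move=> _ ->; apply: finI_from1.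
by rewrite bigcup_set1.
Qed.

Lemma bo_nbhs (p : betaT) (A : set tree) : proj1_sig p A -> nbhs p (basic_open A).
Proof. by move=> pA; apply: open_nbhs_nbhs; split; [apply: bo_open|]. Qed.

Lemma ultra_ne (x : betaT) : ~ proj1_sig x set0.
Proof. have UF := proj2_sig x; exact: filter_not_empty. Qed.

Lemma ultra_I (x : betaT) A B : proj1_sig x A -> proj1_sig x B -> proj1_sig x (A `&` B).
Proof. have UF := proj2_sig x; exact: filterI. Qed.

Lemma ultra_S (x : betaT) (A B : set tree) : A `<=` B -> proj1_sig x A -> proj1_sig x B.
Proof. have UF := proj2_sig x; exact: filterS. Qed.

Lemma ultra_T (x : betaT) : proj1_sig x setT.
Proof. have UF := proj2_sig x; exact: filterT. Qed.

Lemma ultra_VC (x : betaT) A : proj1_sig x A \/ proj1_sig x (~` A).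
Proof. have UF := proj2_sig x; exact: in_ultra_setVsetC. Qed.

Lemma cl_mem (F : set_system betaT) (PF : ProperFilter F) p A :
  cluster F p -> F (basic_open A) -> proj1_sig p A.
Proof.
move=> clp FA; case: (ultra_VC p A) => // nA.
have [q [Aq nAq]] := clp _ _ FA (bo_nbhs nA).
by exfalso; apply: (ultra_ne (x:=q)); apply: ultra_S (ultra_I Aq nAq) => t [].
Qed.

Lemma compact_bo (K : set betaT) A : compact K -> compact (K `&` basic_open A).
Proof.
move=> cK F PF FKA.
have FK : F K by apply: filterS FKA => ? [].
have [p [Kp clp]] := cK F PF FK.
exists p; split => //; split => //; apply: cl_mem clp _.
by apply: filterS FKA => ? [].
Qed.

Lemma hat_mem (x w : betaT) (P A : set tree) :
  (forall u, P u -> proj1_sig w [set v | A (hat u v)]) -> proj1_sig x P ->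
  hat_ext (proj1_sig x) (proj1_sig w) A.
Proof. by move=> H xP; apply: ultra_S xP => u /H. Qed.

Section Main.
Variable K : set betaT.
Hypothesis K0 : K !=set0.
Hypothesis cK : compact K.
Hypothesis hK : hat_closed K.
Hypothesis mK : forall K' : set betaT, K' !=set0 -> compact K' -> hat_closed K' ->
     K' `<=` K -> K' = K.

Lemma ell_ge n x : K x -> proj1_sig x [set t | (n <= ell t)%N].
Proof.
elim: n x => [|n IH] x Kx; first by apply: ultra_S (ultra_T x).
set A := [set t | (n.+1 <= ell t)%N].
have step : forall a b, K a -> K b -> exists2 z, K z & proj1_sig z A.
  move=> a b Ka Kb; have [z Kz zE] := hK Ka Kb; exists z => //.
  rewrite zE; apply: hat_mem (IH _ Ka) => u /= nu.
  by apply: ultra_S (ultra_T b) => v _ /=; rewrite /A /= ltnS.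
have E : K `&` basic_open A = K.
  apply: mK.
  - have [a Ka] := K0; have [z Kz zA] := step a a Ka Ka; by exists z.
  - exact: compact_bo.
  - move=> a b [Ka _] [Kb _]; have [z Kz zE] := hK Ka Kb; exists z => //.
    split => //; rewrite /basic_open /= zE; apply: hat_mem (IH _ Ka) => u /= nu.
    by apply: ultra_S (ultra_T b) => v _ /=; rewrite /A /= ltnS.
  - by move=> ? [].
by move: Kx; rewrite -E => -[].
Qed.

Definition G (N c : nat) : set tree := [set t | ell t %% N = c].

Lemma part_mem (x : betaT) N : (0 < N)%N -> exists2 c, (c < N)%N & proj1_sig x (G N c).
Proof.
move=> N0.
suff H : forall m, proj1_sig x [set t | (ell t %% N < m)%N] ->
   exists2 c, (c < N)%N & proj1_sig x (G N c).
  by apply: (H N); apply: ultra_S (ultra_T x) => t _ /=; rewrite ltn_pmod.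
elim=> [|m IH] xm.
  by exfalso; apply: (ultra_ne (x:=x)); apply: ultra_S xm => t /=.
case: (ultra_VC x (G N m)) => Gm.
  exists m => //; have [t Gt] : exists t, G N m t.
    by apply/set0P/eqP => E; apply: (ultra_ne (x:=x)); rewrite -E.
  by rewrite -Gt ltn_pmod.
apply: IH; apply: ultra_S (ultra_I xm Gm) => t [/= + nG].
by rewrite ltnS leq_eqVlt => /orP[/eqP E|//]; exfalso; apply: nG.
Qed.

Lemma modS m N : m.+1 %% N = (m %% N).+1 %% N.
Proof. by rewrite -[m.+1]addn1 -[(m %% N).+1]addn1 modnDml. Qed.

Lemma G_step (x w : betaT) N c : proj1_sig x (G N c) ->
  hat_ext (proj1_sig x) (proj1_sig w) (G N ((c.+1) %% N)).
Proof.
move=> xG; apply: hat_mem xG => u /= Gu; apply: ultra_S (ultra_T w) => v _.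
by rewrite /G /= -Gu modS.
Qed.

Lemma G_iter N c x j : (c < N)%N -> K x -> proj1_sig x (G N c) ->
  exists2 z, K z & proj1_sig z (G N ((c + j) %% N)).
Proof.
move=> cN Kx xG; elim: j => [|j [z Kz zG]].
  by exists x => //; rewrite addn0 modn_small.
have [z' Kz' E] := hK Kz Kz; exists z' => //; rewrite E.
rewrite addnS modS.
by apply: G_step.
Qed.

Lemma G_exists n a : (a < 2 ^ n)%N -> exists2 z, K z & proj1_sig z (G (2 ^ n) a).
Proof.
move=> an; have [x0 Kx0] := K0.
have [c cN xG] := part_mem x0 (expn_gt0 2 n).
have [z Kz zG] := G_iter (a + 2 ^ n - c) cN Kx0 xG.
exists z => //; move: zG.
rewrite subnKC ?modnDr ?modn_small //.
by apply: leq_trans (ltnW cN) _; rewrite leq_addl.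
Qed.

Variable f : nat -> betaT.

Fixpoint alpha (n : nat) : nat :=
  match n with
  | 0 => 0
  | n'.+1 => if `[< proj1_sig (f n') [set t | G (2 ^ n'.+1) (alpha n') (Rt t)] >]
             then alpha n' + 2 ^ n' else alpha n'
  end.

Definition Ga n := G (2 ^ n) (alpha n).

Lemma alpha_lt n : (alpha n < 2 ^ n)%N.
Proof.
elim: n => [//|n IH] /=; case: ifP => _; rewrite expnS mul2n -addnn.
  by rewrite ltn_add2r.
by apply: (leq_trans IH); rewrite leq_addr.
Qed.

Lemma alpha_mod n : alpha n.+1 %% 2 ^ n = alpha n.
Proof.
rewrite /=; case: ifP => _; last by rewrite modn_small // alpha_lt.
by rewrite modnDr modn_small // alpha_lt.
Qed.

Lemma alpha_modle m k : (m <= k)%N -> alpha k %% 2 ^ m = alpha m.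
Proof.
elim: k => [|k IH].
  by rewrite leqn0 => /eqP ->; rewrite modn_small // alpha_lt.
rewrite leq_eqVlt => /orP [/eqP <-|]; first by rewrite modn_small // alpha_lt.
rewrite ltnS => mk; rewrite -(IH mk) -(alpha_mod k) modn_dvdm //.
exact: dvdn_exp2l.
Qed.

Lemma Ga_nest m k t : (m <= k)%N -> Ga k t -> Ga m t.
Proof.
move=> mk; rewrite /Ga /G /= => E.
rewrite -(alpha_modle mk) -E modn_dvdm //; exact: dvdn_exp2l.
Qed.

Lemma alpha_key n : ~ proj1_sig (f n) [set t | Ga n.+1 (Rt t)].
Proof.
rewrite /Ga /=; case: asboolP => [H|H] //.
move=> H2; apply: (ultra_ne (x := f n)); apply: ultra_S (ultra_I H H2).
move=> t [E1 E2]; move: E1 E2; rewrite /G /= => -> /eqP.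
rewrite -{1}[alpha n]addn0 eqn_add2l eq_sym.
by rewrite expn_eq0.
Qed.

Lemma y_exists : exists2 y, K y & forall n, proj1_sig y (Ga n).
Proof.
set B := fun n => K `&` basic_open (Ga n).
have FF : Filter (filter_from setT B).
  apply: filter_fromT_filter; first by exists 0%N.
  move=> i j; exists (maxn i j) => z [Kz zG]; split; split => //.
    by apply: ultra_S zG => t; apply: Ga_nest; rewrite leq_maxl.
  by apply: ultra_S zG => t; apply: Ga_nest; rewrite leq_maxr.
have PF : ProperFilter (filter_from setT B).
  apply: filter_from_proper => i _.
  by have [z Kz zG] := G_exists (alpha_lt i); exists z.
have FK : filter_from setT B K by exists 0%N => // ? [].
have [p [Kp clp]] := cK PF FK.
exists p => // n; apply: cl_mem clp _.
by exists n => // ? [].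
Qed.
End Main.
Unset Implicit Arguments.

Theorem proposition6p5 (K : set betaT) :
  K !=set0 -> compact K -> hat_closed K ->
  (forall K' : set betaT, K' !=set0 -> compact K' -> hat_closed K' ->
     K' `<=` K -> K' = K) ->
  ~ separable K.
Proof.
move=> K0 cK hK mK [D [DK cD KD]].
have [x0 Kx0] := K0.
have [g ginj] := countable_injP _ cD.
set f := fun n => xget x0 [set d | D d /\ g d = n].
have fD : forall d, D d -> f (g d) = d.
  move=> d Dd; have [] : [set d' | D d' /\ g d' = g d] (f (g d)).
    by apply: xgetPex; exists d.
  by move=> Dd' gE; apply: ginj; rewrite ?inE.
have [y Ky yG] := y_exists K0 cK hK f.
have [z Kz zE] := hK x0 y Kx0 Ky.
set A := [set t | Ga f (ell t).+1 (Rt t)].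
have zA : proj1_sig z A.
  by rewrite zE; apply: (hat_mem (P := setT)) (ultra_T x0) => u _; apply: ultra_S (yG (ell u).+2) => v.
have [d [Dd dA]] := KD _ Kz _ (bo_nbhs zA).
have Kd := DK _ Dd.
have H1 := ell_ge K0 cK hK mK (g d) Kd.
have H2 : proj1_sig d (~` [set t | Ga f (g d).+1 (Rt t)]).
  case: (ultra_VC d [set t | Ga f (g d).+1 (Rt t)]) => // H.
  by exfalso; apply: (alpha_key (f := f) (n := g d)); rewrite fD.
apply: (ultra_ne (x := d)); apply: ultra_S (ultra_I (ultra_I H1 H2) dA).
move=> t [[/= le nG] At]; apply: nG; apply: Ga_nest At.
by [].
Qed.
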